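(* Let $\Omega\subset\mathbb{R}^3$ be a domain with boundary $\partial\Omega$ and outward unit normal $\mathbf{n}$, and consider a non-reactive fluid with density $\rho>0$ and temperature $T>0$, heat flux $\mathbf{q}=-K\nabla T$ and entropy flux by heat conduction $\mathbf{q}_s=-\frac{K}{T}\nabla T$, where $K$ is a nonnegative matrix (thermal conductivity). Let $S_T=K/T\geq 0$, let $\mathcal{G}_T e=-\nabla(e/\rho)$ on scalar fields and $\mathcal{G}_T^{*}\mathbf{w}=\frac{1}{\rho}\mathrm{div}\,\mathbf{w}$ on vector fields (the formal adjoint of $\mathcal{G}_T$), let $\mathcal{Q}_T e=\frac{1}{\rho T}\left\|\nabla\frac{e}{\rho}\right\|^2_{S_T}$ (so that $\mathcal{Q}_T e\geq 0$ for all $e$), and define $$\mathcal{J}_{\mathbf{q}}=\mathcal{Q}_T-\mathcal{G}_T^{*}S_T\mathcal{G}_T .$$ Then, with the entropy effort $e_s=\rho T$, the rate of entropy addition by heat flux satisfies $$-\frac{1}{\rho T}\,\mathrm{div}\,\mathbf{q}=\mathcal{J}_{\mathbf{q}}e_s,$$ and $$\int_\Omega e_s\,\mathcal{J}_{\mathbf{q}}e_s=-\int_{\partial\Omega}T\,(\mathbf{q}_s\cdot\mathbf{n}).$$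
   Context: For a vector $\mathbf{v}$ and matrix $X$, $\|\mathbf{v}\|^2_X=\mathbf{v}^{\mathsf T}X^{\mathsf T}\mathbf{v}$. $\mathcal{Q}_T$ is a (nonlinear) operator on scalar fields. Integrals over $\Omega$ and $\partial\Omega$ are with respect to volume and surface measure. *)

(* Defs.v *)
From HB Require Import structures.
From mathcomp Require Import all_boot all_order all_algebra.
From mathcomp Require Import all_classical all_reals all_analysis.
Set Implicit Arguments. Unset Strict Implicit. Unset Printing Implicit Defensive.
Import Order.TTheory GRing.Theory Num.Theory.
Import numFieldNormedType.Exports.
Local Open Scope classical_set_scope.
Local Open Scope ring_scope.

Section Defs.
Variable R : realType.

Notation V3 := 'rV[R]_3.

Definition ee (i : 'I_3) : V3 := delta_mx 0 i.

Definition partial (i : 'I_3) (f : V3 -> R) (x : V3) : R := 'D_(ee i) f x.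

Definition grad (f : V3 -> R) (x : V3) : V3 := \row_i partial i f x.

Definition div (w : V3 -> V3) (x : V3) : R :=
  \sum_(i < 3) partial i (fun y => w y 0 i) x.

(** matrix acting on a vector: M v (column convention), written for rows *)
Definition mapply (M : 'M[R]_3) (v : V3) : V3 := v *m M^T.

Definition dot (u v : V3) : R := (u *m v^T) 0 0.

Definition sqnormX (v : V3) (X : 'M[R]_3) : R := (v *m X^T *m v^T) 0 0.

(** nonnegative (positive semidefinite) matrix *)
Definition psd (M : 'M[R]_3) : Prop := forall v : V3, 0 <= (v *m M *m v^T) 0 0.

Definition S_T (T : V3 -> R) (K : V3 -> 'M[R]_3) (x : V3) : 'M[R]_3 :=
  (T x)^-1 *: K x.
Definition G_T (rho : V3 -> R) (e : V3 -> R) (x : V3) : V3 :=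
  - grad (fun y => e y / rho y) x.
Definition G_T_adj (rho : V3 -> R) (w : V3 -> V3) (x : V3) : R :=
  (rho x)^-1 * div w x.
Definition Q_T (rho T : V3 -> R) (K : V3 -> 'M[R]_3) (e : V3 -> R) (x : V3) : R :=
  (rho x * T x)^-1 * sqnormX (grad (fun y => e y / rho y) x) (S_T T K x).
Definition J_q (rho T : V3 -> R) (K : V3 -> 'M[R]_3) (e : V3 -> R) (x : V3) : R :=
  Q_T rho T K e x
  - G_T_adj rho (fun y => mapply (S_T T K y) (G_T rho e y)) x.

Definition heat_flux (T : V3 -> R) (K : V3 -> 'M[R]_3) (x : V3) : V3 :=
  - mapply (K x) (grad T x).
Definition entropy_flux (T : V3 -> R) (K : V3 -> 'M[R]_3) (x : V3) : V3 :=
  - mapply ((T x)^-1 *: K x) (grad T x).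

Definition C1_on (U : set V3) (f : V3 -> R) : Prop :=
  open U /\ (forall x, U x -> differentiable f x) /\
  (forall i, {within U, continuous (partial i f)}).

Definition C1_near_closure (Om : set V3) (w : V3 -> V3) : Prop :=
  exists U, [/\ open U, closure Om `<=` U & forall i, C1_on U (fun y => w y 0 i)].

Definition to3 (p : (R * R * R)%type) : V3 :=
  \row_(i < 3) (if i == 0 :> nat then p.1.1 else if i == 1 :> nat then p.1.2 else p.2).

Definition vol3 := (((@lebesgue_measure R) \x (@lebesgue_measure R)) \x (@lebesgue_measure R))%E.

Definition vol_int (Om : set V3) (f : V3 -> R) : \bar R :=
  (\int[vol3]_(p in to3 @^-1` Om) (f (to3 p))%:E)%E.

Definition bdry (Om : set V3) : set V3 := closure Om `\` interior Om.

(** sigma is the surface measure of the boundary of Omega and nu its outward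
    unit normal: sigma is finite and carried by the boundary, nu is a unit
    vector on the boundary, and the Gauss--Green (divergence) theorem holds
    for C^1 vector fields on a neighbourhood of the closure of Omega. *)
Definition surface_data (Om : set V3) (sigma : {measure set (R * R * R)%type -> \bar R})
    (nu : V3 -> V3) : Prop :=
  [/\ (sigma setT < +oo)%E,
      sigma (~` (to3 @^-1` bdry Om)) = 0%E,
      (forall x, bdry Om x -> dot (nu x) (nu x) = 1) &
      (forall w, C1_near_closure Om w ->
         vol_int Om (div w) =
         (\int[sigma]_(p in to3 @^-1` bdry Om) (dot (w (to3 p)) (nu (to3 p)))%:E)%E)].

End Defs.

Arguments to3 {R}.
Arguments vol_int {R}.
Arguments bdry {R}.
Arguments surface_data {R}.
Arguments partial {R}.
Arguments heat_flux {R}.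
Arguments entropy_flux {R}.
Arguments J_q {R}.
Arguments dot {R}.
Arguments div {R}.
Arguments psd {R}.
Arguments C1_on {R}.

(* Main.v *)
Require Import Defs.
From HB Require Import structures.
From mathcomp Require Import all_boot all_order all_algebra.
From mathcomp Require Import all_classical all_reals all_analysis.
From mathcomp Require Import ring lra.
Import Order.TTheory GRing.Theory Num.Theory.
Import numFieldNormedType.Exports.
Local Open Scope classical_set_scope.
Local Open Scope ring_scope.

Section L.
Variable R : realType.
Notation V3 := 'rV[R]_3.
Implicit Types (T : V3 -> R) (K : V3 -> 'M[R]_3).

Definition wf T K (y : V3) : V3 := mapply (K y) (grad T y).

Lemma wfE T K y i : wf T K y 0 i = \sum_(k < 3) partial k T y * K y i k.
Proof. rewrite /wf /mapply /grad !mxE; apply: eq_bigr => k _; rewrite !mxE. done. Qed.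

Lemma heatE T K y i : heat_flux T K y 0 i = - wf T K y 0 i.
Proof. by rewrite /heat_flux !mxE. Qed.

Lemma entropyE T K y : entropy_flux T K y = - (T y)^-1 *: wf T K y.
Proof. by rewrite /entropy_flux /wf /mapply linearZ /= -scalemxAr scaleNr. Qed.

Lemma dotE (u v : V3) : dot u v = \sum_(i < 3) u 0 i * v 0 i.
Proof. rewrite /dot !mxE; apply: eq_bigr => k _; rewrite !mxE. done. Qed.

Lemma sqnormE (g : V3) M c : sqnormX g (c *: M) = c * dot (g *m M^T) g.
Proof. by rewrite /sqnormX /dot linearZ /= -scalemxAr -scalemxAl mxE. Qed.

Lemma diff_w U T K y i :
  (forall k, C1_on U (partial k T)) -> (forall i j, C1_on U (fun y => K y i j)) ->
  U y -> differentiable (fun z => wf T K z 0 i) y.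
Proof.
move=> dT dK Uy.
rewrite (_ : (fun z => _) = \sum_(k < 3) (fun z => partial k T z * K z i k)); last first.
  by rewrite fct_sumE; apply/funext => z; rewrite wfE.
apply: differentiable_sum => k.
have := differentiableM ((dT k).2.1 y Uy) ((dK i k).2.1 y Uy); exact.
Qed.

Lemma divN T K x U : (forall k, C1_on U (partial k T)) -> (forall i j, C1_on U (fun y => K y i j)) ->
  U x -> div (heat_flux T K) x = - div (wf T K) x.
Proof.
move=> dT dK Ux; rewrite /div -sumrN; apply: eq_bigr => i _.
rewrite /partial (_ : (fun y => _) = - (fun z => wf T K z 0 i)); last first.
  by apply/funext => z; rewrite heatE.
rewrite deriveN //; exact/diff_derivable/(@diff_w U T K x i dT dK Ux).
Qed.


Lemma partA (rho T : V3 -> R) K U (Om : set V3) x :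
  open Om -> Om `<=` U -> Om x ->
  (forall y, Om y -> 0 < rho y) -> (forall y, Om y -> 0 < T y) ->
  C1_on U T -> (forall k, C1_on U (partial k T)) -> (forall i j, C1_on U (fun y => K y i j)) ->
  - (rho x * T x)^-1 * div (heat_flux T K) x = J_q rho T K (fun y => rho y * T y) x.
Proof.
move=> oOm sOU Omx rho0 T0 dT0 dT dK.
have nb y : Om y -> \forall z \near y, Om z.
  by move=> Omy; apply: open_nbhs_nbhs; split.
have eT y : Om y -> grad (fun z => rho z * T z / rho z) y = grad T y.
  move=> Omy; apply/rowP => k; rewrite !mxE /partial; apply: near_eq_derive.
  move: (nb y Omy); apply: filterS => z Omz.
  by rewrite mulrAC mulfV ?mul1r // gt_eqF // rho0.
have Ux : U x by apply: sOU.
rewrite (@divN T K x U dT dK Ux) /J_q /Q_T eT // /S_T sqnormE /G_T_adj.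
have tx0 : T x != 0 by rewrite gt_eqF // T0.
have rx0 : rho x != 0 by rewrite gt_eqF // rho0.
have -> : div (fun y => mapply ((T y)^-1 *: K y) (G_T rho (fun y0 => rho y0 * T y0) y)) x
   = \sum_(i < 3) - ((T x)^-1 *: partial i (fun z => wf T K z 0 i) x
        + wf T K x 0 i *: (- (T x) ^- 2 *: partial i T x)).
  rewrite /div; apply: eq_bigr => i _.
  rewrite /partial (@near_eq_derive _ _ _ _ (- ((fun y => (T y)^-1) * (fun y => wf T K y 0 i)))); last first.
    move: (nb x Omx); apply: filterS => z Omz.
    change ((mapply ((T z)^-1 *: K z) (G_T rho (fun y0 => rho y0 * T y0) z)) 0 i = - ((T z)^-1 * wf T K z 0 i)).
    by rewrite /G_T eT // /mapply mulNmx linearZ /= -scalemxAr !mxE /wf /mapply /= ?mxE.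
  have dTx : derivable T x (ee _ i) by apply/diff_derivable/(dT0.2.1 x Ux).
  have dwx : derivable (fun z => wf T K z 0 i) x (ee _ i).
    exact/diff_derivable/(@diff_w U T K x i dT dK Ux).
  rewrite deriveN; last by apply: derivableM => //; apply: derivableV.
  by rewrite deriveM //; [rewrite deriveV | apply: derivableV].
rewrite /div dotE (_ : grad T x *m (K x)^T = wf T K x) //.
rewrite /grad.
under [in X in _ * (_ * X)]eq_bigr do rewrite mxE.
rewrite !big_ord_recr !big_ord0 /= /GRing.scale /=.
by field; apply/andP.
Qed.


Lemma cont_sum n (h : 'I_n -> V3 -> R) (y : V3) :
  (forall k, {for y, continuous (h k)}) -> {for y, continuous (fun z => \sum_(k < n) h k z)}.
Proof.
move=> hc; rewrite -fct_sumE.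
elim/big_ind : _ => //; first exact: (@cst_continuous _ _ (0:R) y).
by move=> f g cf cg; apply: continuousD.
Qed.

Lemma C1_w U T K i :
  open U -> (forall k, C1_on U (partial k T)) -> (forall i j, C1_on U (fun y => K y i j)) ->
  C1_on U (fun y => wf T K y 0 i).
Proof.
move=> oU dT dK; split; first done; split.
  by move=> y Uy; apply: (@diff_w U T K y i dT dK Uy).
move=> j; rewrite continuous_open_subspace // => y; rewrite inE => Uy.
pose h := fun z => \sum_(k < 3) (partial k T z * partial j (fun y => K y i k) z
                                 + K z i k * partial j (partial k T) z).
have nU : \forall z \near y, U z by apply: open_nbhs_nbhs; split.
have ehf : \forall z \near y, h z = partial j (fun y => wf T K y 0 i) z.
  move: nU; apply: filterS => z Uz.
  rewrite /partial (_ : (fun z => _) = \sum_(k < 3) (fun z => partial k T z * K z i k)); last first.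
    by rewrite fct_sumE; apply/funext => u; rewrite wfE.
  rewrite derive_sum; last first.
    move=> k; apply: derivableM; apply: diff_derivable.
      exact: ((dT k).2.1 z Uz).
    exact: ((dK i k).2.1 z Uz).
  apply: eq_bigr => k _; rewrite deriveM; last 2 first.
      exact/diff_derivable/((dT k).2.1 z Uz).
    exact/diff_derivable/((dK i k).2.1 z Uz).
  done.
have hc : {for y, continuous h}.
  apply: cont_sum => k; apply: continuousD; apply: continuousM.
  - exact/differentiable_continuous/((dT k).2.1 y Uy).
  - have := (dK i k).2.2 j; rewrite continuous_open_subspace // => /(_ y).
    by rewrite inE => /(_ Uy).
  - exact/differentiable_continuous/((dK i k).2.1 y Uy).
  - have := (dT k).2.2 j; rewrite continuous_open_subspace // => /(_ y).
    by rewrite inE => /(_ Uy).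
rewrite /continuous_at -(nbhs_singleton ehf).
apply: cvg_trans hc; exact: (@near_eq_cvg _ _ (nbhs y) _ h _ ehf).
Qed.


Local Open Scope ereal_scope.
Lemma int_oppe (sigma : {measure set (R * R * R)%type -> \bar R}) (D : set (R * R * R)%type)
  (f : (R * R * R)%type -> R) (M : R) :
  sigma setT < +oo -> (0 <= M)%R -> (forall p, D p -> (`|f p| <= M)%R) ->
  \int[sigma]_(p in D) (- f p)%:E = - \int[sigma]_(p in D) (f p)%:E.
Proof.
move=> sfin M0 fM.
under eq_integral do rewrite EFinN.
apply: integralN; apply: fin_num_adde_defl; rewrite fin_numN.
set g := fun p => (f p)%:E.
have E1 := @ge0_integralE _ _ _ sigma D (g^\-) (fun x _ => funeneg_ge0 g x).
have M0' : forall x : (R * R * R)%type, 0 <= cst M%:E x by move=> x; rewrite /= lee_fin.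
have E2 := @ge0_integralTE _ _ _ sigma (cst M%:E) M0'.
have le1 : \int[sigma]_(x in D) g^\- x <= \int[sigma]_(x in setT) cst M%:E x.
  rewrite E1 E2; apply: ereal_sup_le => _ [h hf <-]; exists h => //= x.
  apply: le_trans (hf x) _; rewrite /patch; case: ifP => [|_]; last by rewrite lee_fin.
  rewrite inE => Dx; rewrite funenegE /g ge_max !lee_fin M0 andbT.
  by apply: le_trans (fM _ Dx); rewrite -normrN ler_norm.
rewrite integral_cst // in le1.
rewrite ge0_fin_numE; last exact: (@integral_ge0 _ _ _ sigma D _ (fun x _ => funeneg_ge0 g x)).
apply: le_lt_trans le1 _.
have sT0 : 0 <= sigma setT by [].
move: sfin sT0; case: (sigma setT) => // r _ _; exact: ltry.
Qed.
Local Close Scope ereal_scope.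


Lemma closure_bounded (A : set V3) : bounded_set A -> bounded_set (closure A).
Proof.
move=> [M0 [M0r HM]]; exists M0; split => // M M0M x cx.
have sub : A `<=` closed_ball_ Num.norm (0 : V3) M.
  by move=> y Ay; rewrite /closed_ball_ /= sub0r normrN; exact: HM.
have cl := @closed_closed_ball_ R _ (0:V3) M.
have := closureS sub cx; have E := (closure_id _).1 cl.
move=> H; have : closed_ball_ Num.norm (0:V3) M x by rewrite E.
by rewrite /closed_ball_ /= sub0r normrN.
Qed.

Lemma bound_w T K U (Om : set V3) :
  bounded_set Om -> closure Om `<=` U ->
  (forall k, C1_on U (partial k T)) -> (forall i j, C1_on U (fun y => K y i j)) ->
  exists M, (0 <= M) /\ forall y, closure Om y -> \sum_(i < 3) `|wf T K y 0 i| <= M.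
Proof.
move=> bOm sU dT dK.
have cO : compact (closure Om).
  by apply: bounded_closed_compact; [exact: closure_bounded | exact: closed_closure].
pose h := fun y => \sum_(i < 3) `|wf T K y 0 i|.
have hc : {within closure Om, continuous h}.
  apply: continuous_in_subspaceT => y; rewrite inE => cy.
  apply: cont_sum => i; apply: (continuous_comp _ (@norm_continuous _ _ _)).
  exact/differentiable_continuous/(@diff_w U T K y i dT dK (sU _ cy)).
have := compact_bounded (continuous_compact hc cO).
move=> [M [Mr HM]].
exists (Num.max (M + 1) 0); split; first by rewrite le_max lexx orbT.
move=> y cy; have := HM (Num.max (M + 1) 0).
have -> : M < Num.max (M + 1) 0.
  by rewrite lt_max ltrDl ltr01.
move=> /(_ isT (h y)) H; apply: le_trans (H _) => //=.
  by rewrite ger0_norm // sumr_ge0.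
by exists y.
Qed.


Lemma dot_bound (u v : V3) : dot v v = 1 -> `|dot u v| <= \sum_(i < 3) `|u 0 i|.
Proof.
move=> v1; rewrite dotE; apply: le_trans (ler_norm_sum _ _ _) _.
apply: ler_sum => i _; rewrite normrM -[X in _ <= X]mulr1 ler_wpM2l //.
have : v 0 i ^+ 2 <= 1.
  rewrite -v1 dotE (bigD1 i) //= expr2 lerDl; apply: sumr_ge0 => j _.
  by rewrite -expr2 sqr_ge0.
by move=> H; rewrite ler_norml; apply/andP; split; nra.
Qed.

End L.

Theorem lemma2 (R : realType) (Om : set 'rV[R]_3)
  (sigma : {measure set (R * R * R)%type -> \bar R}) (nu : 'rV[R]_3 -> 'rV[R]_3)
  (rho T : 'rV[R]_3 -> R) (K : 'rV[R]_3 -> 'M[R]_3) :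
  open Om -> connected Om -> bounded_set Om ->
  measurable (to3 @^-1` Om) ->
  surface_data Om sigma nu ->
  (forall x, closure Om x -> 0 < rho x) ->
  (forall x, closure Om x -> 0 < T x) ->
  (forall x, closure Om x -> psd (K x)) ->
  (exists U, [/\ open U, closure Om `<=` U, C1_on U T,
      (forall i, C1_on U (partial i T)) &
      (forall i j, C1_on U (fun y => K y i j))]) ->
  let e_s := fun x => rho x * T x in
  (forall x, Om x ->
     - (rho x * T x)^-1 * div (heat_flux T K) x = J_q rho T K e_s x) /\
  vol_int Om (fun x => e_s x * J_q rho T K e_s x) =
  (- \int[sigma]_(p in to3 @^-1` bdry Om)
       (T (to3 p) * dot (entropy_flux T K (to3 p)) (nu (to3 p)))%:E)%E.
Proof.
move=> oOm _ bOm mOm [sfin _ nu1 GG] rho0 T0 _ [U [oU sU dT0 dT dK]] e_s.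
have sOmU : Om `<=` U by move=> y Oy; apply: sU; exact: subset_closure.
have rho0' y : Om y -> 0 < rho y by move=> Oy; apply: rho0; exact: subset_closure.
have T0' y : Om y -> 0 < T y by move=> Oy; apply: T0; exact: subset_closure.
have A x : Om x -> - (rho x * T x)^-1 * div (heat_flux T K) x = J_q rho T K e_s x.
  by move=> Ox; apply: (@partA R rho T K U Om x oOm sOmU Ox rho0' T0' dT0 dT dK).
split; first exact: A.
have GGw := GG (@wf R T K) (ex_intro _ U (And3 oU sU (fun i => @C1_w R U T K i oU dT dK))).
have -> : vol_int Om (fun x => e_s x * J_q rho T K e_s x) = vol_int Om (div (@wf R T K)).
  apply: eq_integral => p; rewrite inE /= => Op.
  rewrite -A // (@divN R T K _ U dT dK (sOmU _ Op)) /e_s.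
  have t0 : T (to3 p) != 0 by rewrite gt_eqF // T0'.
  have r0 : rho (to3 p) != 0 by rewrite gt_eqF // rho0'.
  by congr EFin; field; apply/andP.
rewrite GGw.
have [M [M0 HM]] := @bound_w R T K U Om bOm sU dT dK.
rewrite [in RHS](eq_integral (fun p => (- dot (@wf R T K (to3 p)) (nu (to3 p)))%:E)); last first.
  move=> p; rewrite inE /= => Bp.
  have t0 : T (to3 p) != 0 by rewrite gt_eqF // T0 //; case: Bp.
  by rewrite entropyE /dot -scalemxAl mxE mulrA mulrN mulfV // mulN1r.
rewrite (@int_oppe R sigma _ _ M) ?oppeK //.
move=> p /= Bp; apply: le_trans (@dot_bound R _ _ (nu1 _ Bp)) _.
by apply: HM; case: Bp.
Qed.
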